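(* For all $n\in\mathbb N$ and all integers $d\geq 1$, $$\sum_{k=0}^nU_{d-1}\circ T_{(d+1)^k}\prod_{j=0}^k\frac{1}{U_d\circ T_{(d+1)^j}}=\frac{U_{(d+1)^{n+1}-2}}{U_{(d+1)^{n+1}-1}}$$ as rational fractions in $x$.
   Context: $T_n=T_n(x)$ and $U_n=U_n(x)$ denote the Chebyshev polynomials of the first and second kind, defined by $T_0=1$, $T_1=x$, $T_{n+1}=2xT_n-T_{n-1}$ and $U_0=1$, $U_1=2x$, $U_{n+1}=2xU_n-U_{n-1}$ for $n\geq1$. The symbol $\circ$ denotes composition of polynomials. *)

(* Defs.v *)
From HB Require Import structures.
From mathcomp Require Import all_boot all_order all_algebra.
From mathcomp Require Import fraction.
Set Implicit Arguments. Unset Strict Implicit. Unset Printing Implicit Defensive.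
Import GRing.Theory.
Local Open Scope ring_scope.

Fixpoint chebT_pair (n : nat) : {poly rat} * {poly rat} :=
  match n with
  | 0%N => (1, 'X)
  | n'.+1 => let: (a, b) := chebT_pair n' in (b, 2%:P * 'X * b - a)
  end.
Definition chebT (n : nat) : {poly rat} := (chebT_pair n).1.

Fixpoint chebU_pair (n : nat) : {poly rat} * {poly rat} :=
  match n with
  | 0%N => (1, 2%:P * 'X)
  | n'.+1 => let: (a, b) := chebU_pair n' in (b, 2%:P * 'X * b - a)
  end.
Definition chebU (n : nat) : {poly rat} := (chebU_pair n).1.

Notation ratfrac := {fraction {poly rat}}.
Definition toF (p : {poly rat}) : ratfrac := FracField.tofrac p.

(* Main.v *)
Require Import Defs.
From HB Require Import structures.
From mathcomp Require Import all_boot all_order all_algebra.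
From mathcomp Require Import fraction ring zify.
Import GRing.Theory.
Local Open Scope ring_scope.

Fixpoint Sp (n : nat) : {poly rat} * {poly rat} :=
  match n with
  | 0%N => (0, 1)
  | n'.+1 => let: (a, b) := Sp n' in (b, 2%:P * 'X * b - a)
  end.
Definition Sc n := (Sp n).1.

Lemma SpE n : Sp n = (Sc n, Sc n.+1).
Proof. by elim: n => [|n IH] //=; rewrite /Sc /= IH. Qed.
Lemma S0 : Sc 0 = 0. Proof. by []. Qed.
Lemma S1 : Sc 1 = 1. Proof. by []. Qed.
Lemma SS n : Sc n.+2 = 2 * 'X * Sc n.+1 - Sc n.
Proof. by rewrite {1}/Sc /= SpE polyC_natr. Qed.

Lemma chebT_pairE n : chebT_pair n = (chebT n, chebT n.+1).
Proof. by elim: n => [|n IH] //=; rewrite /chebT /= IH. Qed.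
Lemma T0 : chebT 0 = 1. Proof. by []. Qed.
Lemma T1 : chebT 1 = 'X. Proof. by []. Qed.
Lemma TS n : chebT n.+2 = 2 * 'X * chebT n.+1 - chebT n.
Proof. by rewrite {1}/chebT /= chebT_pairE polyC_natr. Qed.

Lemma chebU_pairE n : chebU_pair n = (chebU n, chebU n.+1).
Proof. by elim: n => [|n IH] //=; rewrite /chebU /= IH. Qed.
Lemma US n : chebU n.+2 = 2 * 'X * chebU n.+1 - chebU n.
Proof. by rewrite {1}/chebU /= chebU_pairE polyC_natr. Qed.

Lemma US_S n : chebU n = Sc n.+1.
Proof.
suff: chebU n = Sc n.+1 /\ chebU n.+1 = Sc n.+2 by case.
elim: n => [|n [IH1 IH2]].
  by split => //; rewrite SS S1 S0 /chebU /= polyC_natr mulr1 subr0.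
by split => //; rewrite US SS IH1 IH2.
Qed.

Lemma ind2 (P : nat -> Prop) : P 0%N -> P 1%N -> (forall n, P n -> P n.+1 -> P n.+2) -> forall n, P n.
Proof.
move=> H0 H1 H n; suff: P n /\ P n.+1 by case.
by elim: n => [|n [A B]]; split => //; apply: H.
Qed.

Lemma keyK b e : 2 * chebT b * Sc (e + b) = Sc (e + 2 * b) + Sc e.
Proof.
elim/ind2: b e => [e|e|b IH1 IH2 e].
- rewrite T0 !addn0. ring.
- by rewrite T1 addn1 muln1 addn2 SS; ring.
have E1 := IH2 e.+1. have E2 := IH1 e.+2.
have i1 : (e.+1 + b.+1 = e + b.+2)%N by lia.
have i2 : (e.+2 + b = e + b.+2)%N by lia.
have i3 : (e.+1 + 2 * b.+1 = (e + 2 * b).+3)%N by lia.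
have i4 : (e.+2 + 2 * b = (e + 2 * b).+2)%N by lia.
have i5 : (e + 2 * b.+2 = (e + 2 * b).+4)%N by lia.
rewrite i1 i3 in E1. rewrite i2 i4 in E2.
rewrite i5 TS (SS (e + 2 * b).+2).
rewrite (SS e) in E2.
have -> : 2 * (2 * 'X * chebT b.+1 - chebT b) * Sc (e + b.+2) =
  2 * 'X * (2 * chebT b.+1 * Sc (e + b.+2)) - 2 * chebT b * Sc (e + b.+2) by ring.
rewrite E1 E2. ring.
Qed.

Lemma compA a b : Sc (a * b) = (Sc a \Po chebT b) * Sc b.
Proof.
elim/ind2: a => [|| a IH1 IH2].
- by rewrite mul0n S0 comp_poly0 mul0r.
- by rewrite mul1n S1 comp_polyC mul1r.
have K := keyK b (a * b).
have i1 : (a * b + b = a.+1 * b)%N by rewrite mulSn addnC.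
have i2 : (a * b + 2 * b = a.+2 * b)%N by rewrite !mulSn; lia.
rewrite i1 i2 in K.
have -> : Sc (a.+2 * b) = 2 * chebT b * Sc (a.+1 * b) - Sc (a * b) by rewrite K; ring.
rewrite SS comp_polyB !comp_polyM comp_polyX -polyC_natr comp_polyC polyC_natr IH1 IH2.
ring.
Qed.

Lemma Sc_at1 n : (Sc n).[1] = n%:R.
Proof.
elim/ind2: n => [|| n IH1 IH2]; first by rewrite S0 horner0.
  by rewrite S1 hornerC.
rewrite SS hornerD hornerN !hornerM hornerX IH1 IH2 -polyC_natr hornerC.
rewrite mulr1 -!natrM -natrB; last by lia.
congr (_%:R); lia.
Qed.

Lemma Sc_neq0 n : (0 < n)%N -> Sc n != 0.
Proof.
move=> hn; apply/negP => /eqP H.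
have := Sc_at1 n; rewrite H horner0 => /eqP.
by rewrite eq_sym Num.Theory.pnatr_eq0; case: n hn H.
Qed.

Lemma keyB q k : Sc (q + k).+1 * Sc q.+1 - Sc q * Sc (q + k).+2 = Sc k.+1.
Proof.
elim: q => [|q IH]; first by rewrite S0 S1 add0n; ring.
rewrite -IH !addSn (SS (q+k).+1) (SS q); ring.
Qed.

Lemma toF_neq0 n : (0 < n)%N -> toF (Sc n) != 0.
Proof. by move=> hn; rewrite /toF tofrac_eq0 Sc_neq0. Qed.

Lemma prodL m k : \prod_(j < k.+1) toF (Sc m \Po chebT (m ^ j)) = toF (Sc (m ^ k.+1)).
Proof.
elim: k => [|k IH].
  by rewrite big_ord1 expn0 T1 comp_polyXr expn1.
rewrite big_ord_recr IH /= [in RHS]expnS compA /toF rmorphM /= mulrC.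
done.
Qed.

Lemma mainS m d n : m = d.+1 -> (1 <= d)%N ->
  \sum_(k < n.+1) (toF (Sc d \Po chebT (m ^ k)) * (toF (Sc (m ^ k.+1)))^-1)
  = toF (Sc (m ^ n.+1).-1) / toF (Sc (m ^ n.+1)).
Proof.
move=> -> hd.
elim: n => [|n IH].
  by rewrite big_ord1 expn0 T1 comp_polyXr expn1.
rewrite big_ord_recr IH /=.
have hM : (0 < d.+1 ^ n.+1)%N by rewrite expn_gt0.
rewrite [(d.+1 ^ n.+2)%N]expnS.
set M := (d.+1 ^ n.+1)%N in hM *. clearbody M.
have hD : (0 < d * M)%N by rewrite muln_gt0 hd.
have hN : (d.+1 * M = M + d * M)%N by rewrite mulSn.
rewrite hN.
have KB := keyB M.-1 (d * M).-1.
have j1 : ((M.-1 + (d * M).-1).+1 = (M + d * M).-1)%N by lia.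
have j2 : ((M.-1 + (d * M).-1).+1.+1 = (M + d * M))%N by lia.
have j3 : (M.-1.+1 = M)%N by lia.
have j4 : ((d * M).-1.+1 = d * M)%N by lia.
rewrite j1 j3 j4 compA in KB. have j5 : ((M + d * M).-1.+1 = M + d * M)%N by lia. rewrite j5 in KB.
have bn : toF (Sc M) != 0 by apply: toF_neq0.
have en : toF (Sc (M + d * M)) != 0 by apply: toF_neq0; lia.
move: KB => /(congr1 toF); rewrite /toF !rmorphB !rmorphM /=.
rewrite /toF in bn en.
set a := tofrac (Sc M.-1); set b := tofrac (Sc M) in bn *; set c := tofrac (_ \Po _).
set e := tofrac (Sc (M + d * M)) in en *; set f := tofrac (Sc (M + d * M).-1).
move=> KB. clearbody a b c e f.
rewrite addf_div; [|exact: bn|exact: en].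
rewrite -KB addrC subrK [b * e]mulrC -mulf_div divff; last exact: bn.
by rewrite mulr1.
Qed.

Theorem theorem1p3 (n d : nat) (hd : (1 <= d)%N) :
  \sum_(k < n.+1)
     (toF (chebU d.-1 \Po chebT ((d.+1) ^ k)) *
      \prod_(j < k.+1) (toF (chebU d \Po chebT ((d.+1) ^ j)))^-1)
  = toF (chebU ((d.+1) ^ n.+1 - 2)) / toF (chebU ((d.+1) ^ n.+1 - 1)).
Proof.
transitivity (\sum_(k < n.+1) (toF (Sc d \Po chebT (d.+1 ^ k)) * (toF (Sc (d.+1 ^ k.+1)))^-1)).
  apply: eq_bigr => k _; rewrite US_S prednK // prodfV -prodL.
  by congr (_ * (_)^-1); apply: eq_bigr => j _; rewrite US_S.
rewrite (@mainS (d.+1) d n (erefl _) hd) !US_S.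
have hN : (2 <= d.+1 ^ n.+1)%N.
  by rewrite expnS (leq_trans (_ : 2 <= d.+1 * 1)%N) // ?leq_mul2l ?expn_gt0 // muln1 ltnS.
move: hN; set N := (d.+1 ^ n.+1)%N => hN.
have -> : (N - 2).+1 = N.-1 by lia.
by have -> : (N - 1).+1 = N by lia.
Qed.
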